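(* (In $\mathbf{CZF}$.) The following are equivalent: (1) $\mathbf{LLPO}$; (2) for all $\alpha,\beta\in\mathbb{N}_\infty$, if $\alpha\vee\beta=1$ then $\alpha=1$ or $\beta=1$; (3) for every inhabited finitely enumerable set $F\subseteq\mathbb{N}_\infty$, if $\bigvee F=1$ then there exists $\alpha\in F$ with $\alpha=1$.
   Context: $\mathbf{CZF}$: constructive Zermelo–Fraenkel set theory. $\mathbf{LLPO}$: for every $\alpha:\mathbb{N}\to 2$ such that $\alpha(i)=\alpha(j)=1$ implies $i=j$, either $\alpha(2i)=0$ for all $i$, or $\alpha(2i+1)=0$ for all $i$. $\mathbb{N}_\infty=\{\alpha:\mathbb{N}\to 2\mid \forall i\leq j,\ \alpha(j)\leq\alpha(i)\}$ with the pointwise order; joins of finitely enumerable subsets are computed pointwise (pointwise max); $1$ is the constant function with value $1$. A set is finitely enumerable if it is the image of a surjection from some $n\in\mathbb{N}$. *)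

(* Defs.v *)
(* no classical axioms: the ambient logic is constructive,
   matching the CZF setting of the paper. *)
From Stdlib Require Import Arith Bool.
Open Scope bool_scope.

Definition LLPO : Prop :=
  forall alpha : nat -> bool,
    (forall i j, alpha i = true -> alpha j = true -> i = j) ->
    (forall i, alpha (2 * i) = false) \/ (forall i, alpha (2 * i + 1) = false).

Definition in_Ninf (alpha : nat -> bool) : Prop :=
  forall i j, i <= j -> Bool.le (alpha j) (alpha i).

(* the top element 1 of N_infinity; equality of sequences is extensional *)
Definition is_one (alpha : nat -> bool) : Prop := forall k, alpha k = true.

Definition join2 (alpha beta : nat -> bool) : nat -> bool :=
  fun k => alpha k || beta k.

(* join of the finitely enumerable family e 0, ..., e (n-1) (pointwise max) *)
Fixpoint join_fin (n : nat) (e : nat -> nat -> bool) : nat -> bool :=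
  fun k => match n with
           | 0 => false
           | S m => join_fin m e k || e m k
           end.

(* Main.v *)
Require Import Defs.
From Stdlib Require Import Arith.
From Stdlib Require Import Lia Bool.

Definition fz (f : nat -> bool) (i : nat) : bool :=
  negb (f i) && (match i with 0 => true | S p => f p end).

Lemma ninf_le (f : nat -> bool) i j : in_Ninf f -> i <= j -> f i = false -> f j = false.
Proof.
  intros H Hij Hi. specialize (H i j Hij). rewrite Hi in H.
  destruct (f j); simpl in H; auto.
Qed.

Lemma fz_unique f p q : in_Ninf f -> fz f p = true -> fz f q = true -> p = q.
Proof.
  intros Hf.
  assert (K : forall p q, p < q -> fz f p = true -> fz f q = true -> False).
  { intros a b Hab Ha Hb. unfold fz in *.
    destruct (f a) eqn:Ea; simpl in Ha; [discriminate|].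
    destruct b as [|b']; [lia|].
    apply andb_prop in Hb. destruct Hb as [_ Hb].
    rewrite (ninf_le f a b' Hf ltac:(lia) Ea) in Hb. discriminate. }
  intros Hp Hq. destruct (lt_eq_lt_dec p q) as [[H|H]|H]; auto.
  - exfalso; eauto.
  - exfalso; eauto.
Qed.

Lemma fz_false_one f : (forall i, fz f i = false) -> is_one f.
Proof.
  intros H k. induction k as [|p IH].
  - specialize (H 0). unfold fz in H. destruct (f 0); auto.
  - specialize (H (S p)). unfold fz in H. rewrite IH in H.
    destruct (f (S p)); auto.
Qed.

Lemma fz_true_false f i : fz f i = true -> f i = false.
Proof. unfold fz. destruct (f i); simpl; auto. Qed.

Definition P2 : Prop :=
  forall alpha beta : nat -> bool,
      in_Ninf alpha -> in_Ninf beta ->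
      is_one (join2 alpha beta) -> is_one alpha \/ is_one beta.

Definition gam (a b : nat -> bool) (k : nat) : bool :=
  if Nat.even k then fz a (Nat.div2 k) else fz b (Nat.div2 k).

Lemma gam_even a b i : gam a b (2 * i) = fz a i.
Proof.
  unfold gam. rewrite Nat.div2_double, Nat.even_mul. reflexivity.
Qed.

Lemma gam_odd a b i : gam a b (2 * i + 1) = fz b i.
Proof.
  unfold gam. replace (2 * i + 1) with (S (2 * i)) by lia.
  rewrite Nat.div2_succ_double, Nat.even_succ, Nat.odd_mul. reflexivity.
Qed.

Lemma llpo_P2 : LLPO -> P2.
Proof.
  intros L a b Ha Hb Hj.
  assert (cross : forall p q, fz a p = true -> fz b q = true -> False).
  { intros p q Hp Hq. apply fz_true_false in Hp, Hq.
    specialize (Hj (Nat.max p q)). unfold join2 in Hj.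
    rewrite (ninf_le a p (Nat.max p q) Ha ltac:(lia) Hp), (ninf_le b q (Nat.max p q) Hb ltac:(lia) Hq) in Hj.
    discriminate. }
  destruct (L (gam a b)) as [H|H].
  - intros i j Hi Hj'.
    destruct (Nat.Even_or_Odd i) as [[p ->]|[p ->]];
    destruct (Nat.Even_or_Odd j) as [[q ->]|[q ->]];
    rewrite ?gam_even in Hi; rewrite ?gam_odd in Hi; rewrite ?gam_even in Hj'; rewrite ?gam_odd in Hj'.
    + pose proof (fz_unique a p q Ha Hi Hj'). lia.
    + exfalso; exact (cross p q Hi Hj').
    + exfalso; exact (cross q p Hj' Hi).
    + pose proof (fz_unique b p q Hb Hi Hj'). lia.
  - left. apply fz_false_one. intros i. rewrite <- (gam_even a b). apply H.
  - right. apply fz_false_one. intros i. rewrite <- (gam_odd a b). apply H.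
Qed.

Fixpoint seqA (al : nat -> bool) (off : nat) (k : nat) : bool :=
  match k with
  | 0 => negb (al off)
  | S p => seqA al off p && negb (al (2 * S p + off))
  end.

Lemma seqA_ninf al off : in_Ninf (seqA al off).
Proof.
  intros i j Hij. induction Hij.
  - destruct (seqA al off i); reflexivity.
  - change (seqA al off (S m)) with (seqA al off m && negb (al (2 * S m + off))).
    destruct (seqA al off m), (seqA al off i), (al (2 * S m + off)); simpl in *; auto.
Qed.

Lemma seqA_one al off : is_one (seqA al off) -> forall m, al (2 * m + off) = false.
Proof.
  intros H m. specialize (H m). destruct m as [|m]; simpl in *.
  - destruct (al off); auto.
  - apply andb_prop in H. destruct H as [_ H].
    destruct (al (2 * S m + off)) eqn:E; auto.
    simpl in E. rewrite E in H. discriminate.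
Qed.

Lemma seqA_false al off k : seqA al off k = false -> exists m, m <= k /\ al (2 * m + off) = true.
Proof.
  induction k as [|p IH]; simpl; intros H.
  - exists 0. split; auto. simpl. destruct (al off); auto.
  - destruct (seqA al off p) eqn:E.
    + exists (S p). split; auto.
      destruct (al (2 * S p + off)) eqn:E2; auto.
      simpl in E2. rewrite E2 in H. discriminate.
    + destruct (IH eq_refl) as [m [? ?]]. exists m. split; auto.
Qed.

Lemma P2_llpo : P2 -> LLPO.
Proof.
  intros P al Hu.
  destruct (P (seqA al 0) (seqA al 1) (seqA_ninf _ _) (seqA_ninf _ _)) as [H|H].
  - intros k. unfold join2.
    destruct (seqA al 0 k) eqn:E0; auto.
    destruct (seqA al 1 k) eqn:E1; auto.
    destruct (seqA_false _ _ _ E0) as [m1 [_ H1]].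
    destruct (seqA_false _ _ _ E1) as [m2 [_ H2]].
    specialize (Hu _ _ H1 H2). lia.
  - left. intros i. rewrite <- (Nat.add_0_r (2 * i)). apply seqA_one; auto.
  - right. intros i. apply seqA_one; auto.
Qed.

Definition P3 : Prop :=
  forall (n : nat) (e : nat -> nat -> bool),
      0 < n ->
      (forall i, i < n -> in_Ninf (e i)) ->
      is_one (join_fin n e) ->
      exists i, i < n /\ is_one (e i).

Lemma P3_P2 : P3 -> P2.
Proof.
  intros P a b Ha Hb Hj.
  destruct (P 2 (fun i => if i =? 0 then a else b) ltac:(lia)) as [i [Hi Hone]].
  - intros i Hi. destruct i; simpl; auto.
  - intros k. specialize (Hj k). unfold join2 in Hj. simpl. exact Hj.
  - destruct i as [|[|i]]; simpl in Hone; auto; lia.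
Qed.

Lemma join_fin_ninf n e : (forall i, i < n -> in_Ninf (e i)) -> in_Ninf (join_fin n e).
Proof.
  induction n as [|m IH]; intros He i j Hij; simpl.
  - exact I.
  - pose proof (IH (fun i Hi => He i ltac:(lia)) i j Hij) as H1.
    pose proof (He m ltac:(lia) i j Hij) as H2.
    destruct (join_fin m e i), (join_fin m e j), (e m i), (e m j); simpl in *; auto.
Qed.

Lemma P2_P3 : P2 -> P3.
Proof.
  intros P n. induction n as [|m IH]; intros e Hn He Hj; [lia|].
  destruct m as [|m].
  - exists 0. split; [lia|]. intros k. specialize (Hj k). simpl in Hj. exact Hj.
  - destruct (P (join_fin (S m) e) (e (S m)) (join_fin_ninf (S m) e (fun i Hi => He i ltac:(lia)))
       (He (S m) ltac:(lia)) Hj) as [H|H].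
    + destruct (IH e ltac:(lia) (fun i Hi => He i ltac:(lia)) H) as [i [? ?]].
      exists i. split; auto.
    + exists (S m). split; auto.
Qed.

Theorem proposition4p7 :
  (LLPO <->
   (forall alpha beta : nat -> bool,
      in_Ninf alpha -> in_Ninf beta ->
      is_one (join2 alpha beta) -> is_one alpha \/ is_one beta))
  /\
  (LLPO <->
   (forall (n : nat) (e : nat -> nat -> bool),
      0 < n ->
      (forall i, i < n -> in_Ninf (e i)) ->
      is_one (join_fin n e) ->
      exists i, i < n /\ is_one (e i))).
Proof.
  split; split.
  - exact llpo_P2.
  - exact P2_llpo.
  - intros L. exact (P2_P3 (llpo_P2 L)).
  - intros H. exact (P2_llpo (P3_P2 H)).
Qed.
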